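(* Let $X=L^\infty[-1,1]$ and define $T:X\to X$ by $(Tx)(t)=0$ for $t\le 0$ and $(Tx)(t)=x(t)+x(-t)$ for $t>0$. Then $T$ is positive and satisfies condition $(\beta_+)$, but $T$ does not satisfy condition $(\beta)$.
   Context: For a subset $A$ of a vector lattice $X$, $A^d=\{x\in X: |x|\wedge|a|=0 \text{ for all } a\in A\}$ and $A^{dd}=(A^d)^d$. For $a,b\in X$ we write $a\lhd b$ if $\{a\}^{dd}\subseteq\{b\}^{dd}$. A linear operator $T$ satisfies condition $(\beta)$ if $Ta\lhd Tb$ whenever $a\lhd b$; it satisfies condition $(\beta_+)$ if $Ta\lhd Tb$ whenever $a\lhd b$ with $a,b\ge 0$. *)

(* Defs.v *)
(* L^oo[-1,1] is modelled by representatives: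
   functions R -> R, measurable on [-1,1] and essentially bounded there;
   all lattice relations (=0, >=0, disjointness) are taken a.e. on [-1,1]. *)
From HB Require Import structures.
From mathcomp Require Import all_boot all_order all_algebra.
From mathcomp Require Import all_classical all_reals all_analysis.
Set Implicit Arguments. Unset Strict Implicit. Unset Printing Implicit Defensive.
Import Order.TTheory GRing.Theory Num.Theory.
Local Open Scope classical_set_scope.
Local Open Scope ring_scope.

Section Linf.
Variable R : realType.

Definition Iset : set R := `[(-1)%R, 1%R]%classic.

Definition aeI (P : R -> Prop) : Prop :=
  {ae (@lebesgue_measure R), forall t, Iset t -> P t}.

Definition Linf (x : R -> R) : Prop :=
  measurable_fun Iset x /\ exists M : R, aeI (fun t => `|x t| <= M).

Definition nonnegX (x : R -> R) : Prop := aeI (fun t => 0 <= x t).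

Definition disjX (x y : R -> R) : Prop :=
  aeI (fun t => Num.min `|x t| `|y t| = 0).

(* A^d (as a set of representatives; closed under a.e. equality) *)
Definition dcomp (A : set (R -> R)) : set (R -> R) :=
  [set x | Linf x /\ forall a, A a -> disjX x a].

Definition ddcomp (A : set (R -> R)) : set (R -> R) := dcomp (dcomp A).

Definition lhd (a b : R -> R) : Prop := ddcomp [set a] `<=` ddcomp [set b].

Definition positiveOp (T : (R -> R) -> (R -> R)) : Prop :=
  forall x, Linf x -> nonnegX x -> nonnegX (T x).

Definition cond_beta (T : (R -> R) -> (R -> R)) : Prop :=
  forall a b, Linf a -> Linf b -> lhd a b -> lhd (T a) (T b).

Definition cond_beta_plus (T : (R -> R) -> (R -> R)) : Prop :=
  forall a b, Linf a -> Linf b -> nonnegX a -> nonnegX b ->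
    lhd a b -> lhd (T a) (T b).

Definition Tex (x : R -> R) : R -> R :=
  fun t => if t <= 0 then 0 else x t + x (- t).

End Linf.

(* Main.v *)
Require Import Defs.
From mathcomp Require Import all_boot all_order all_algebra.
From mathcomp Require Import all_classical all_reals all_analysis.
Set Implicit Arguments. Unset Strict Implicit. Unset Printing Implicit Defensive.
Import Order.TTheory GRing.Theory Num.Theory.
Local Open Scope classical_set_scope.
Local Open Scope ring_scope.

Local Notation mu := (@lebesgue_measure _).

Lemma aeIP {R : realType} (P : R -> Prop) : aeI P ->
  exists N : set R, [/\ measurable N, mu N = 0%E & forall t, Iset t -> ~ N t -> P t].
Proof.
move=> [N [mN N0 sN]]; exists N; split => // t It Nt.
apply: contrapT => Pt; apply: Nt; apply: sN => /= H; exact/Pt/H.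
Qed.

Lemma aeIE {R : realType} (P : R -> Prop) (N : set R) : measurable N -> mu N = 0%E ->
  (forall t, Iset t -> ~ N t -> P t) -> aeI P.
Proof.
move=> mN N0 H; exists N; split => // t /= nP; apply: contrapT => Nt.
by apply: nP => It; apply: H.
Qed.

Lemma aeI_T {R : realType} (P : R -> Prop) : (forall t, Iset t -> P t) -> aeI P.
Proof.
move=> H; apply: (@aeIE _ _ set0) => //; by move=> t It _; exact: H.
Qed.

Lemma aeI_mono {R : realType} (P Q : R -> Prop) :
  (forall t, Iset t -> P t -> Q t) -> aeI P -> aeI Q.
Proof.
move=> PQ /aeIP [N [mN N0 HN]]; apply: (aeIE mN N0) => t It Nt.
by apply: PQ => //; exact: HN.
Qed.

Lemma aeI_and {R : realType} (P Q : R -> Prop) :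
  aeI P -> aeI Q -> aeI (fun t => P t /\ Q t).
Proof.
move=> /aeIP [N [mN N0 HN]] /aeIP [M [mM M0 HM]].
have mNM : measurable (N `|` M) by exact: measurableU.
have NM0 : mu (N `|` M) = 0%E.
  have : (mu.-negligible (N `|` M)).
    by apply: negligibleU; [exists N|exists M]; split.
  by move=> h; apply/negligibleP.
apply: (aeIE mNM NM0) => t It NMt; split.
  by apply: HN => // Nt; apply: NMt; left.
by apply: HM => // Mt; apply: NMt; right.
Qed.

Lemma Iset_opp {R : realType} (t : R) : Iset t -> Iset (- t).
Proof.
rewrite /Iset /= !in_itv /= => /andP [h1 h2].
by rewrite lerNl opprK h2 lerNl h1.
Qed.

Lemma aeI_refl {R : realType} (P : R -> Prop) :
  aeI P -> aeI (fun t => P (- t)).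
Proof.
move=> /aeIP [N [mN N0 HN]].
have mN' : measurable ((-%R) @^-1` N : set R).
  have := @measurable_realfun.oppr_measurable R setT measurableT N mN.
  by rewrite setTI.
apply: (@aeIE _ _ (-%R @^-1` N)) => //.
  by rewrite -[RHS]N0 -(lebesgue_measureN mN).
by move=> t It Nt; apply: HN => //; exact: Iset_opp.
Qed.

Lemma mIset {R : realType} : measurable (@Iset R).
Proof. exact: measurable_itv. Qed.

Lemma mrefl {R : realType} (x : R -> R) : measurable_fun (@Iset R) x ->
  measurable_fun (@Iset R) (fun t => x (- t)).
Proof.
move=> mx.
apply: (@measurable_comp _ _ _ _ _ _ (@Iset R) x (@Iset R) (fun t : R => - t)) => //.
- exact: mIset.
- by move=> _ [t It <-]; exact: Iset_opp.
- exact: measurable_realfun.oppr_measurable.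
Qed.

Lemma mTex {R : realType} (x : R -> R) : measurable_fun (@Iset R) x ->
  measurable_fun (@Iset R) (Tex x).
Proof.
move=> mx; rewrite /Tex.
apply: measurable_fun_if.
- exact: mIset.
- apply: measurable_realfun.measurable_fun_ler => //; exact: measurable_id.
- exact: measurable_cst.
- apply: (measurable_funS mIset); first by move=> t [].
  apply: measurable_realfun.measurable_funD => //; exact: mrefl.
Qed.

Lemma Linf_Tex {R : realType} (x : R -> R) : Linf x -> Linf (Tex x).
Proof.
move=> [mx [M HM]]; split; first exact: mTex.
exists (`|M| + `|M|).
have H2 := aeI_and HM (aeI_refl HM).
apply: aeI_mono H2 => t It [h1 h2]; rewrite /Tex.
case: ifPn => _; first by rewrite normr0 addr_ge0.
apply: (le_trans (ler_normD _ _)); apply: lerD.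
  exact: (le_trans h1 (ler_norm _)).
exact: (le_trans h2 (ler_norm _)).
Qed.

Lemma pos_Tex {R : realType} : positiveOp (@Tex R).
Proof.
move=> x _ Hx; have H2 := aeI_and Hx (aeI_refl Hx).
apply: aeI_mono H2 => t It [h1 h2]; rewrite /Tex.
by case: ifPn => _ //; exact: addr_ge0.
Qed.

Lemma minr0 {R : realType} (u v : R) : 0 <= u -> 0 < v -> Num.min u v = 0 -> u = 0.
Proof.
move=> u0 v0; have [uv|vu] := leP u v => //.
by move=> h; move: v0; rewrite h ltxx.
Qed.

Lemma lhd_if {R : realType} (a b : R -> R) :
  aeI (fun t => a t != 0 -> b t != 0) -> lhd a b.
Proof.
move=> H x [Lx Hx]; split => // y [Ly Hy].
apply: Hx; split => // _ ->.
have Hyb := Hy b erefl.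
apply: aeI_mono (aeI_and H Hyb) => t It [h1 h2].
have [a0|an0] := eqVneq (a t) 0.
  by rewrite a0 normr0 min_r.
have bn0 := h1 an0.
have := minr0 (normr_ge0 _) _ h2; rewrite normr_gt0 => /(_ bn0) ->.
by rewrite min_l.
Qed.

Lemma lhd_of {R : realType} (a b : R -> R) : Linf a -> Linf b -> lhd a b ->
  aeI (fun t => a t != 0 -> b t != 0).
Proof.
move=> La [mb _] H.
pose y : R -> R := \1_(@Iset R `&` b @^-1` [set 0]).
have mS : measurable (@Iset R `&` b @^-1` [set (0:R)]).
  exact: (mb mIset _ (measurable_set1 0)).
have Ly : Linf y.
  split.
    exact: measurable_realfun.measurable_indic.
  exists 1; apply: aeI_T => t _; rewrite /y indicE.
  by case: (_ \in _); rewrite ?normr1 ?normr0.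
have yb : disjX y b.
  apply: aeI_T => t It; rewrite /y indicE.
  have [/set_mem [_ /= ->]|_] := boolP (t \in _).
    by rewrite normr0 min_r.
  by rewrite normr0 min_l.
have aa : ddcomp [set a] a.
  split => // z [_ Hz]; apply: aeI_mono (Hz a erefl) => t _.
  by rewrite minC.
have [_ Hab] := H a aa.
have ay := Hab y (conj Ly (fun _ e => eq_ind_r (fun w => disjX y w) yb e)).
apply: aeI_mono ay => t It h an0; apply/eqP => bt0.
move: h; rewrite /y indicE mem_set //= normr1 => h.
have := minr0 (normr_ge0 _) ltr01 h; move/eqP; rewrite normr_eq0.
by rewrite (negbTE an0).
Qed.

Lemma betap_Tex {R : realType} : cond_beta_plus (@Tex R).
Proof.
move=> a b La Lb Na Nb hab; apply: lhd_if.
have H := lhd_of La Lb hab.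
have H1 := aeI_and (aeI_and H (aeI_refl H)) (aeI_and (aeI_and Na (aeI_refl Na)) (aeI_and Nb (aeI_refl Nb))).
apply: aeI_mono H1 => t It [[h1 h2] [[na1 na2] [nb1 nb2]]]; rewrite /Tex.
case: ifPn => _; first by rewrite eqxx.
rewrite (paddr_eq0 na1 na2) (paddr_eq0 nb1 nb2) !negb_and.
by case/orP => [/h1 ->|/h2 ->]; rewrite ?orbT.
Qed.

Lemma nbeta_Tex {R : realType} : ~ cond_beta (@Tex R).
Proof.
move=> hb.
pose a : R -> R := fun _ => 1.
pose b : R -> R := fun t => if t <= 0 then -1 else 1.
have La : Linf a.
  split; first exact: measurable_cst.
  by exists 1; apply: aeI_T => t _; rewrite /a normr1.
have Lb : Linf b.
  split.
    apply: measurable_fun_if; first exact: mIset.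
    - apply: measurable_realfun.measurable_fun_ler => //; exact: measurable_id.
    - exact: measurable_cst.
    - exact: measurable_cst.
  by exists 1; apply: aeI_T => t _; rewrite /b; case: ifPn; rewrite ?normrN normr1.
have lab : lhd a b.
  apply: lhd_if; apply: aeI_T => t _ _; rewrite /b.
  by case: ifPn; rewrite ?oppr_eq0 oner_eq0.
have := hb a b La Lb lab.
have Tb0 : Tex b = fun _ => 0.
  apply: funext => t; rewrite /Tex /b.
  case: ifPn => // /negbTE t0; rewrite t0.
  have -> : - t <= 0 by rewrite oppr_le0 ltW // ltNge t0.
  by rewrite addrN.
rewrite Tb0 => H.
have LTa := Linf_Tex La.
have aa : ddcomp [set Tex a] (Tex a).
  split => // z [_ Hz]; apply: aeI_mono (Hz _ erefl) => t _.
  by rewrite minC.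
have [_ Hd] := H _ aa.
have dd : disjX (Tex a) (Tex a).
  apply: Hd; split => // _ ->; apply: aeI_T => t _.
  by rewrite normr0 min_r.
have [N [mN N0 HN]] := aeIP dd.
have sub : ([set` `]0, 1]] : set R) `<=` N.
  move=> t /=; rewrite in_itv /= => /andP [t0 t1].
  apply: contrapT => Nt.
  have It : Iset t.
    by rewrite /Iset /= in_itv /= t1 andbT (le_trans _ (ltW t0)) // lerN10.
  have := HN t It Nt; rewrite /Tex /a.
  rewrite ifN; last by rewrite -ltNge.
  rewrite minxx => /eqP; rewrite normr_eq0 => /eqP.
  by apply/eqP; rewrite paddr_eq0 ?ler01 // negb_and oner_eq0.
have := @le_measure _ _ (measurableTypeR R) (@lebesgue_measure R) _ _ _ _ sub.
rewrite !inE => /(_ (measurable_itv _) mN) h.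
have h3 : (lebesgue_measure N <= 0)%E by rewrite N0.
have h1 : (@lebesgue_measure R (`]0%R, 1%R]%classic) = 1%E).
  by rewrite lebesgue_measure_itv /= lte_fin ltr01 oppr0 adde0.
have e1 : (1 <= @lebesgue_measure R (`]0%R, 1%R]%classic))%E by rewrite h1.
have := le_trans e1 (le_trans h h3).
by rewrite lee_fin ler10.
Qed.

Theorem mainTheorem15 (R : realType) :
  (forall x : R -> R, Linf x -> Linf (Tex x)) /\
  positiveOp (@Tex R) /\ cond_beta_plus (@Tex R) /\ ~ cond_beta (@Tex R).
Proof.
split; first exact: Linf_Tex.
split; first exact: pos_Tex.
split; first exact: betap_Tex.
exact: nbeta_Tex.
Qed.
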